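(* On a dynamic surface $\Sigma_t$, the temporal curvature tensor $\dot R^\beta_{\ \alpha\gamma}=\partial_t\Gamma^\beta_{\alpha\gamma}+R^\beta_{\ \gamma\alpha\delta}V^\delta-\nabla_\alpha\dot\Gamma^\beta_\gamma$ satisfies $$\dot R^\beta_{\ \alpha\gamma}=\nabla^\beta\!\left(CB_{\alpha\gamma}\right)-\nabla_\gamma\!\left(CB^\beta_\alpha\right)=B_{\alpha\gamma}\nabla^\beta C-B^\beta_\alpha\nabla_\gamma C .$$ Consequently, for every smooth contravariant surface field $\psi^\beta$, $(\dot\nabla\nabla_\alpha-\nabla_\alpha\dot\nabla-CB^\gamma_\alpha\nabla_\gamma)\psi^\beta=(B_{\alpha\gamma}\nabla^\beta C-B^\beta_\alpha\nabla_\gamma C)\psi^\gamma$.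
   Context: Setting: $\Sigma_t$ is a smooth one-parameter family of 2-dimensional surfaces in Euclidean 3-space given by $\mathbf R(S^1,S^2,t)$ in surface coordinates $S^\alpha$; $\mathbf S_\alpha=\partial_\alpha\mathbf R$, metric $S_{\alpha\beta}=\mathbf S_\alpha\cdot\mathbf S_\beta$ with inverse $S^{\alpha\beta}$ (used to raise/lower indices), $\mathbf S^\alpha=S^{\alpha\beta}\mathbf S_\beta$, unit normal $\mathbf N$, Christoffel symbols $\Gamma^\gamma_{\alpha\beta}=\mathbf S^\gamma\cdot\partial_\alpha\mathbf S_\beta$, surface covariant derivative $\nabla_\alpha$, curvature tensor $B_{\alpha\beta}=\mathbf N\cdot\nabla_\alpha\mathbf S_\beta$. The Riemann tensor is defined by $(\nabla_\alpha\nabla_\beta-\nabla_\beta\nabla_\alpha)\psi^\gamma=R^\gamma_{\ \delta\alpha\beta}\psi^\delta$. Velocity $\mathbf V=\partial_t\mathbf R$ at fixed $S^\alpha$, $C=\mathbf V\cdot\mathbf N$, $V^\alpha=\mathbf V\cdot\mathbf S^\alpha$. Christoffel time symbol $\dot\Gamma^\alpha_\beta=\nabla_\beta V^\alpha-CB^\alpha_\beta$. Invariant time derivative: $\dot\nabla\psi=\partial_t\psi-V^\alpha\nabla_\alpha\psi$ on scalars, $\dot\nabla\psi^\alpha=\partial_t\psi^\alpha-V^\gamma\nabla_\gamma\psi^\alpha+\dot\Gamma^\alpha_\gamma\psi^\gamma$, $\dot\nabla\psi_\alpha=\partial_t\psi_\alpha-V^\gamma\nabla_\gamma\psi_\alpha-\dot\Gamma^\gamma_\alpha\psi_\gamma$,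 one term per index for higher rank. *)

(* Defs.v *)
From Stdlib Require Import Reals ClassicalEpsilon.
Open Scope R_scope.

(** Scalar fields of (S^1, S^2, t). *)
Definition field := R -> R -> R -> R.

(** Direction k: 0 -> S^1, 1 -> S^2, otherwise (2) -> t. *)
Definition dir (k : nat) (f : field) (s1 s2 t : R) : R -> R :=
  match k with
  | O => fun x => f x s2 t
  | S O => fun x => f s1 x t
  | _ => fun x => f s1 s2 x
  end.
Definition coord (k : nat) (s1 s2 t : R) : R :=
  match k with O => s1 | S O => s2 | _ => t end.

Definition pd (k : nat) (f : field) : field := fun s1 s2 t =>
  epsilon (inhabits 0) (fun l => derivable_pt_lim (dir k f s1 s2 t) (coord k s1 s2 t) l).

Fixpoint pds (l : list nat) (f : field) : field :=
  match l with nil => f | cons k l' => pd k (pds l' f) end.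

Definition open3 (U : R -> R -> R -> Prop) : Prop :=
  forall s1 s2 t, U s1 s2 t -> exists d, 0 < d /\
    forall a b c, Rabs (a - s1) < d -> Rabs (b - s2) < d -> Rabs (c - t) < d -> U a b c.

Definition cont3_at (f : field) (s1 s2 t : R) : Prop :=
  forall eps, 0 < eps -> exists d, 0 < d /\
    forall a b c, Rabs (a - s1) < d -> Rabs (b - s2) < d -> Rabs (c - t) < d ->
      Rabs (f a b c - f s1 s2 t) < eps.

Definition smooth_on (U : R -> R -> R -> Prop) (f : field) : Prop :=
  forall (l : list nat) s1 s2 t, U s1 s2 t ->
    cont3_at (pds l f) s1 s2 t /\
    forall k, exists d, derivable_pt_lim (dir k (pds l f) s1 s2 t) (coord k s1 s2 t) d.

(** Index sums over {1,2} (encoded 0,1) and over the three Cartesian components. *)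
Definition sum2 (F : nat -> field) : field := fun s1 s2 t => F O s1 s2 t + F (S O) s1 s2 t.
Definition dot3 (u v : nat -> field) : field := fun s1 s2 t =>
  u O s1 s2 t * v O s1 s2 t + u (S O) s1 s2 t * v (S O) s1 s2 t
  + u (S (S O)) s1 s2 t * v (S (S O)) s1 s2 t.
Definition cross (u v : nat -> field) (i : nat) : field := fun s1 s2 t =>
  match i with
  | O => u (S O) s1 s2 t * v (S (S O)) s1 s2 t - u (S (S O)) s1 s2 t * v (S O) s1 s2 t
  | S O => u (S (S O)) s1 s2 t * v O s1 s2 t - u O s1 s2 t * v (S (S O)) s1 s2 t
  | _ => u O s1 s2 t * v (S O) s1 s2 t - u (S O) s1 s2 t * v O s1 s2 t
  end.

Section Geometry.
(** X i = i-th Cartesian component of the position vector R(S^1,S^2,t). *)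
Variable X : nat -> field.

Definition Sv (a i : nat) : field := pd a (X i).
Definition gcov (a b : nat) : field := dot3 (Sv a) (Sv b).
Definition gdet : field := fun s1 s2 t =>
  gcov O O s1 s2 t * gcov (S O) (S O) s1 s2 t - gcov O (S O) s1 s2 t * gcov (S O) O s1 s2 t.
Definition gcon (a b : nat) : field := fun s1 s2 t =>
  match a, b with
  | O, O => gcov (S O) (S O) s1 s2 t / gdet s1 s2 t
  | S O, S O => gcov O O s1 s2 t / gdet s1 s2 t
  | _, _ => - gcov a b s1 s2 t / gdet s1 s2 t
  end.
Definition Sup (a i : nat) : field :=
  sum2 (fun b s1 s2 t => gcon a b s1 s2 t * Sv b i s1 s2 t).
Definition Nrm (i : nat) : field := fun s1 s2 t =>
  cross (Sv O) (Sv (S O)) i s1 s2 t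
  / sqrt (dot3 (cross (Sv O) (Sv (S O))) (cross (Sv O) (Sv (S O))) s1 s2 t).
Definition Gam (c a b : nat) : field :=
  dot3 (Sup c) (fun i => pd a (Sv b i)).
Definition covS (a b i : nat) : field := fun s1 s2 t =>
  pd a (Sv b i) s1 s2 t - sum2 (fun c s1 s2 t => Gam c a b s1 s2 t * Sv c i s1 s2 t) s1 s2 t.
Definition Bcov (a b : nat) : field := dot3 Nrm (covS a b).
Definition Bmix (b a : nat) : field :=
  sum2 (fun d s1 s2 t => gcon b d s1 s2 t * Bcov d a s1 s2 t).
Definition Vel (i : nat) : field := pd 2 (X i).
Definition Cn : field := dot3 Vel Nrm.
Definition Vup (a : nat) : field := dot3 Vel (Sup a).

(** Covariant derivatives; u b = u^b, T a c = T_{ac}, M b a = M^b_a. *)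
Definition nab_v (a : nat) (u : nat -> field) (b : nat) : field := fun s1 s2 t =>
  pd a (u b) s1 s2 t + sum2 (fun d s1 s2 t => Gam b a d s1 s2 t * u d s1 s2 t) s1 s2 t.
Definition nab_up_s (b : nat) (f : field) : field :=
  sum2 (fun d s1 s2 t => gcon b d s1 s2 t * pd d f s1 s2 t).
Definition nab_cov2 (d : nat) (T : nat -> nat -> field) (a c : nat) : field := fun s1 s2 t =>
  pd d (T a c) s1 s2 t
  - sum2 (fun w s1 s2 t => Gam w d a s1 s2 t * T w c s1 s2 t) s1 s2 t
  - sum2 (fun w s1 s2 t => Gam w d c s1 s2 t * T a w s1 s2 t) s1 s2 t.
Definition nab_up_cov2 (b : nat) (T : nat -> nat -> field) (a c : nat) : field :=
  sum2 (fun d s1 s2 t => gcon b d s1 s2 t * nab_cov2 d T a c s1 s2 t).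
Definition nab_mix (d : nat) (M : nat -> nat -> field) (b a : nat) : field := fun s1 s2 t =>
  pd d (M b a) s1 s2 t
  + sum2 (fun w s1 s2 t => Gam b d w s1 s2 t * M w a s1 s2 t) s1 s2 t
  - sum2 (fun w s1 s2 t => Gam w d a s1 s2 t * M b w s1 s2 t) s1 s2 t.

(** Riemann tensor R^g_{d a b}, the coordinate expression of
    (nabla_a nabla_b - nabla_b nabla_a) psi^g = R^g_{d a b} psi^d. *)
Definition Riem (g d a b : nat) : field := fun s1 s2 t =>
  pd a (Gam g b d) s1 s2 t - pd b (Gam g a d) s1 s2 t
  + sum2 (fun w s1 s2 t => Gam g a w s1 s2 t * Gam w b d s1 s2 t) s1 s2 t
  - sum2 (fun w s1 s2 t => Gam g b w s1 s2 t * Gam w a d s1 s2 t) s1 s2 t.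

Definition Gdot (b c : nat) : field := fun s1 s2 t =>
  nab_v c Vup b s1 s2 t - Cn s1 s2 t * Bmix b c s1 s2 t.

Definition Rdot (b a c : nat) : field := fun s1 s2 t =>
  pd 2 (Gam b a c) s1 s2 t
  + sum2 (fun d s1 s2 t => Riem b c a d s1 s2 t * Vup d s1 s2 t) s1 s2 t
  - nab_mix a Gdot b c s1 s2 t.

Definition tdv (u : nat -> field) (b : nat) : field := fun s1 s2 t =>
  pd 2 (u b) s1 s2 t
  - sum2 (fun g s1 s2 t => Vup g s1 s2 t * nab_v g u b s1 s2 t) s1 s2 t
  + sum2 (fun g s1 s2 t => Gdot b g s1 s2 t * u g s1 s2 t) s1 s2 t.
Definition tdmix (M : nat -> nat -> field) (b a : nat) : field := fun s1 s2 t =>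
  pd 2 (M b a) s1 s2 t
  - sum2 (fun g s1 s2 t => Vup g s1 s2 t * nab_mix g M b a s1 s2 t) s1 s2 t
  + sum2 (fun g s1 s2 t => Gdot b g s1 s2 t * M g a s1 s2 t) s1 s2 t
  - sum2 (fun g s1 s2 t => Gdot g a s1 s2 t * M b g s1 s2 t) s1 s2 t.

End Geometry.

(* Main.v *)
Require Import Defs.
From Stdlib Require Import Reals Lra Lia ClassicalEpsilon FunctionalExtensionality PropExtensionality.
From Coquelicot Require Coquelicot.
Open Scope R_scope.

Definition Dv k (f : field) s1 s2 t l := derivable_pt_lim (dir k f s1 s2 t) (coord k s1 s2 t) l.
Definition Df k f s1 s2 t := exists l, Dv k f s1 s2 t l.

Lemma pd_Dv k f s1 s2 t l : Dv k f s1 s2 t l -> pd k f s1 s2 t = l.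
Proof.
  intro H. unfold pd.
  pose proof (epsilon_spec (inhabits 0) (fun l => derivable_pt_lim (dir k f s1 s2 t) (coord k s1 s2 t) l) (ex_intro _ l H)) as H2.
  exact (uniqueness_limite _ _ _ _ H2 H).
Qed.

Lemma Df_Dv k f s1 s2 t : Df k f s1 s2 t -> Dv k f s1 s2 t (pd k f s1 s2 t).
Proof. intros [l H]. rewrite (pd_Dv _ _ _ _ _ _ H). exact H. Qed.

Lemma dir_val k f s1 s2 t : dir k f s1 s2 t (coord k s1 s2 t) = f s1 s2 t.
Proof. destruct k as [|[|k]]; reflexivity. Qed.

Lemma Dv_add k f g s1 s2 t l1 l2 : Dv k f s1 s2 t l1 -> Dv k g s1 s2 t l2 ->
  Dv k (fun a b c => f a b c + g a b c) s1 s2 t (l1 + l2).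
Proof.
  unfold Dv; intros H1 H2.
  replace (dir k (fun a b c => f a b c + g a b c) s1 s2 t) with (plus_fct (dir k f s1 s2 t) (dir k g s1 s2 t))
    by (destruct k as [|[|k]]; reflexivity).
  apply derivable_pt_lim_plus; auto.
Qed.

Lemma Dv_sub k f g s1 s2 t l1 l2 : Dv k f s1 s2 t l1 -> Dv k g s1 s2 t l2 ->
  Dv k (fun a b c => f a b c - g a b c) s1 s2 t (l1 - l2).
Proof.
  unfold Dv; intros H1 H2.
  replace (dir k (fun a b c => f a b c - g a b c) s1 s2 t) with (minus_fct (dir k f s1 s2 t) (dir k g s1 s2 t))
    by (destruct k as [|[|k]]; reflexivity).
  apply derivable_pt_lim_minus; auto.
Qed.

Lemma Dv_opp k f s1 s2 t l1 : Dv k f s1 s2 t l1 ->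
  Dv k (fun a b c => - f a b c) s1 s2 t (- l1).
Proof.
  unfold Dv; intros H1.
  replace (dir k (fun a b c => - f a b c) s1 s2 t) with (opp_fct (dir k f s1 s2 t))
    by (destruct k as [|[|k]]; reflexivity).
  apply derivable_pt_lim_opp; auto.
Qed.

Lemma Dv_mul k f g s1 s2 t l1 l2 : Dv k f s1 s2 t l1 -> Dv k g s1 s2 t l2 ->
  Dv k (fun a b c => f a b c * g a b c) s1 s2 t (l1 * g s1 s2 t + f s1 s2 t * l2).
Proof.
  unfold Dv; intros H1 H2.
  replace (dir k (fun a b c => f a b c * g a b c) s1 s2 t) with (mult_fct (dir k f s1 s2 t) (dir k g s1 s2 t))
    by (destruct k as [|[|k]]; reflexivity).
  rewrite <- (dir_val k f s1 s2 t), <- (dir_val k g s1 s2 t).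
  apply derivable_pt_lim_mult; auto.
Qed.

Lemma Dv_div k f g s1 s2 t l1 l2 : Dv k f s1 s2 t l1 -> Dv k g s1 s2 t l2 -> g s1 s2 t <> 0 ->
  Dv k (fun a b c => f a b c / g a b c) s1 s2 t ((l1 * g s1 s2 t - l2 * f s1 s2 t) / (g s1 s2 t)²).
Proof.
  unfold Dv; intros H1 H2 H3.
  replace (dir k (fun a b c => f a b c / g a b c) s1 s2 t) with (div_fct (dir k f s1 s2 t) (dir k g s1 s2 t))
    by (destruct k as [|[|k]]; reflexivity).
  rewrite <- (dir_val k f s1 s2 t), <- (dir_val k g s1 s2 t).
  apply derivable_pt_lim_div; auto. rewrite dir_val; auto.
Qed.

Lemma Dv_sqrt k f s1 s2 t l1 : Dv k f s1 s2 t l1 -> 0 < f s1 s2 t ->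
  Dv k (fun a b c => sqrt (f a b c)) s1 s2 t (l1 * / (2 * sqrt (f s1 s2 t))).
Proof.
  unfold Dv; intros H1 H3.
  replace (dir k (fun a b c => sqrt (f a b c)) s1 s2 t) with (comp sqrt (dir k f s1 s2 t))
    by (destruct k as [|[|k]]; reflexivity).
  rewrite <- (dir_val k f s1 s2 t).
  rewrite Rmult_comm.
  apply derivable_pt_lim_comp; auto. apply derivable_pt_lim_sqrt. rewrite dir_val; auto.
Qed.

Lemma Dv_const k r s1 s2 t : Dv k (fun _ _ _ => r) s1 s2 t 0.
Proof.
  unfold Dv.
  replace (dir k (fun _ _ _ => r) s1 s2 t) with (fct_cte r) by (destruct k as [|[|k]]; reflexivity).
  apply derivable_pt_lim_const.
Qed.

Lemma dir_loc (U : R -> R -> R -> Prop) f g s1 s2 t d k :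
  0 < d -> (forall a b c, Rabs (a - s1) < d -> Rabs (b - s2) < d -> Rabs (c - t) < d -> U a b c) ->
  (forall a b c, U a b c -> f a b c = g a b c) ->
  forall x, Rabs (x - coord k s1 s2 t) < d -> dir k f s1 s2 t x = dir k g s1 s2 t x.
Proof.
  intros Hd HU Hfg x Hx.
  assert (H0 : forall y, Rabs (y - y) < d) by (intro y; unfold Rminus; rewrite Rplus_opp_r, Rabs_R0; exact Hd).
  destruct k as [|[|k]]; simpl in *; apply Hfg; apply HU; auto.
Qed.

Lemma Dv_loc U f g k s1 s2 t l : open3 U -> U s1 s2 t ->
  (forall a b c, U a b c -> f a b c = g a b c) -> Dv k f s1 s2 t l -> Dv k g s1 s2 t l.
Proof.
  intros HU Hp Hfg H.
  destruct (HU _ _ _ Hp) as [d [Hd HB]].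
  pose proof (dir_loc U f g s1 s2 t d k Hd HB Hfg) as E.
  unfold Dv in *. intros eps Heps.
  destruct (H eps Heps) as [del Hdel].
  assert (Hm : 0 < Rmin del d) by (apply Rmin_pos; [apply cond_pos|exact Hd]).
  exists (mkposreal _ Hm). intros h Hh0 Hh. simpl in Hh.
  assert (E1 : Rabs (coord k s1 s2 t + h - coord k s1 s2 t) < d).
  { replace (coord k s1 s2 t + h - coord k s1 s2 t) with h by ring.
    apply Rlt_le_trans with (1 := Hh); apply Rmin_r. }
  assert (E2 : Rabs (coord k s1 s2 t - coord k s1 s2 t) < d).
  { unfold Rminus; rewrite Rplus_opp_r, Rabs_R0; exact Hd. }
  rewrite <- (E _ E1), <- (E _ E2).
  apply Hdel; auto. apply Rlt_le_trans with (1 := Hh); apply Rmin_l.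
Qed.

Lemma pd_loc U f g k s1 s2 t : open3 U -> U s1 s2 t ->
  (forall a b c, U a b c -> f a b c = g a b c) -> pd k f s1 s2 t = pd k g s1 s2 t.
Proof.
  intros HU Hp Hfg. unfold pd. f_equal.
  apply functional_extensionality; intro l. apply propositional_extensionality.
  split; intro H.
  - exact (Dv_loc U f g k s1 s2 t l HU Hp Hfg H).
  - refine (Dv_loc U g f k s1 s2 t l HU Hp _ H). intros; symmetry; auto.
Qed.

Lemma Df_loc U f g k s1 s2 t : open3 U -> U s1 s2 t ->
  (forall a b c, U a b c -> f a b c = g a b c) -> Df k f s1 s2 t -> Df k g s1 s2 t.
Proof. intros HU Hp Hfg [l H]. exists l. exact (Dv_loc U f g k s1 s2 t l HU Hp Hfg H). Qed.

Lemma pd_const_loc U f r k s1 s2 t : open3 U -> U s1 s2 t ->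
  (forall a b c, U a b c -> f a b c = r) -> pd k f s1 s2 t = 0.
Proof.
  intros HU Hp Hf. rewrite (pd_loc U f (fun _ _ _ => r) k s1 s2 t HU Hp Hf).
  apply pd_Dv, Dv_const.
Qed.

Module SchM.
Import Coquelicot.Coquelicot.

Lemma loc_R (x d : R) (P : R -> Prop) : 0 < d -> (forall y, Rabs (y - x) < d -> P y) -> locally x P.
Proof. intros Hd H. exists (mkposreal d Hd). intros y Hy. apply H. exact Hy. Qed.

Lemma schwarz2 (f f1 f2 f12 f21 : R -> R -> R) x y d : 0 < d ->
  (forall u v, Rabs (u - x) < d -> Rabs (v - y) < d ->
     derivable_pt_lim (fun z => f z v) u (f1 u v) /\
     derivable_pt_lim (fun w => f u w) v (f2 u v) /\
     derivable_pt_lim (fun z => f2 z v) u (f21 u v) /\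
     derivable_pt_lim (fun w => f1 u w) v (f12 u v)) ->
  continuity_2d_pt f21 x y -> continuity_2d_pt f12 x y ->
  f21 x y = f12 x y.
Proof.
  intros Hd H C21 C12.
  assert (Hd2 : 0 < d / 2) by lra.
  assert (E2 : forall z v, Rabs (z - x) < d -> Rabs (v - y) < d -> Derive (fun t => f z t) v = f2 z v).
  { intros z v Hz Hv. apply is_derive_unique, is_derive_Reals. apply H; auto. }
  assert (E1 : forall z v, Rabs (z - x) < d -> Rabs (v - y) < d -> Derive (fun t => f t v) z = f1 z v).
  { intros z v Hz Hv. apply is_derive_unique, is_derive_Reals. apply H; auto. }
  assert (L21 : forall u v, Rabs (u - x) < d/2 -> Rabs (v - y) < d/2 ->
     is_derive (fun z => Derive (fun t => f z t) v) u (f21 u v)).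
  { intros u v Hu Hv. apply is_derive_ext_loc with (f := fun z => f2 z v).
    - apply loc_R with (d := d/2); auto. intros z Hz. symmetry; apply E2.
      + replace (z - x) with ((z - u) + (u - x)) by ring.
        eapply Rle_lt_trans; [apply Rabs_triang|]. lra.
      + lra.
    - apply is_derive_Reals. apply H; lra. }
  assert (L12 : forall u v, Rabs (u - x) < d/2 -> Rabs (v - y) < d/2 ->
     is_derive (fun z => Derive (fun t => f t z) u) v (f12 u v)).
  { intros u v Hu Hv. apply is_derive_ext_loc with (f := fun z => f1 u z).
    - apply loc_R with (d := d/2); auto. intros z Hz. symmetry; apply E1.
      + lra.
      + replace (z - y) with ((z - v) + (v - y)) by ring.
        eapply Rle_lt_trans; [apply Rabs_triang|]. lra.
    - apply is_derive_Reals. apply H; lra. }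
  assert (Hx0 : Rabs (x - x) < d/2) by (unfold Rminus; rewrite Rplus_opp_r, Rabs_R0; lra).
  assert (Hy0 : Rabs (y - y) < d/2) by (unfold Rminus; rewrite Rplus_opp_r, Rabs_R0; lra).
  transitivity (Derive (fun z => Derive (fun t => f z t) y) x).
  { symmetry; apply is_derive_unique; apply L21; auto. }
  transitivity (Derive (fun z => Derive (fun t => f t z) x) y).
  2: { apply is_derive_unique; apply L12; auto. }
  apply Schwarz.
  - exists (mkposreal _ Hd2). intros u v Hu Hv. simpl in Hu, Hv.
    split; [|split; [|split]].
    + exists (f1 u v). apply is_derive_Reals. apply H; lra.
    + exists (f2 u v). apply is_derive_Reals. apply H; lra.
    + exists (f21 u v). apply L21; auto.
    + exists (f12 u v). apply L12; auto.
  - intros eps. destruct (C21 eps) as [del Hdel].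
    assert (Hm : 0 < Rmin del (d/2)) by (apply Rmin_pos; [apply cond_pos|lra]).
    exists (mkposreal _ Hm). intros u v Hu Hv. simpl in Hu, Hv.
    assert (Hu1 := Rlt_le_trans _ _ _ Hu (Rmin_l _ _)). assert (Hu2 := Rlt_le_trans _ _ _ Hu (Rmin_r _ _)).
    assert (Hv1 := Rlt_le_trans _ _ _ Hv (Rmin_l _ _)). assert (Hv2 := Rlt_le_trans _ _ _ Hv (Rmin_r _ _)).
    pose proof (is_derive_unique _ _ _ (L21 u v Hu2 Hv2)) as e1. pose proof (is_derive_unique _ _ _ (L21 x y Hx0 Hy0)) as e2.
    simpl in e1, e2 |- *. rewrite e1, e2.
    apply Hdel; auto.
  - intros eps. destruct (C12 eps) as [del Hdel].
    assert (Hm : 0 < Rmin del (d/2)) by (apply Rmin_pos; [apply cond_pos|lra]).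
    exists (mkposreal _ Hm). intros u v Hu Hv. simpl in Hu, Hv.
    assert (Hu1 := Rlt_le_trans _ _ _ Hu (Rmin_l _ _)). assert (Hu2 := Rlt_le_trans _ _ _ Hu (Rmin_r _ _)).
    assert (Hv1 := Rlt_le_trans _ _ _ Hv (Rmin_l _ _)). assert (Hv2 := Rlt_le_trans _ _ _ Hv (Rmin_r _ _)).
    pose proof (is_derive_unique _ _ _ (L12 u v Hu2 Hv2)) as e1. pose proof (is_derive_unique _ _ _ (L12 x y Hx0 Hy0)) as e2.
    simpl in e1, e2 |- *. rewrite e1, e2.
    apply Hdel; auto.
Qed.

End SchM.
Import SchM.

Lemma smooth_Dv U F l k s1 s2 t : smooth_on U F -> U s1 s2 t ->
  Dv k (pds l F) s1 s2 t (pd k (pds l F) s1 s2 t).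
Proof. intros HF Hp. apply Df_Dv. destruct (HF l s1 s2 t Hp) as [_ H]. apply H. Qed.

Lemma smooth_cont U F l s1 s2 t : smooth_on U F -> U s1 s2 t -> cont3_at (pds l F) s1 s2 t.
Proof. intros HF Hp. apply (HF l s1 s2 t Hp). Qed.

Lemma R0lt (y d : R) : 0 < d -> Rabs (y - y) < d.
Proof. intro. unfold Rminus; rewrite Rplus_opp_r, Rabs_R0; auto. Qed.

Lemma pd_comm01 U F s1 s2 t : open3 U -> smooth_on U F -> U s1 s2 t ->
  pd 0 (pd 1 F) s1 s2 t = pd 1 (pd 0 F) s1 s2 t.
Proof.
  intros HU HF Hp. destruct (HU _ _ _ Hp) as [d [Hd HB]].
  apply (schwarz2 (fun z w => F z w t) (fun u v => pd 0 F u v t) (fun u v => pd 1 F u v t)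
     (fun u v => pd 1 (pd 0 F) u v t) (fun u v => pd 0 (pd 1 F) u v t) s1 s2 d Hd).
  - intros u v Hu Hv. assert (HUp : U u v t) by (apply HB; auto; apply R0lt; auto).
    repeat split.
    + exact (smooth_Dv U F nil 0 u v t HF HUp).
    + exact (smooth_Dv U F nil 1 u v t HF HUp).
    + exact (smooth_Dv U F (1%nat::nil)%list 0 u v t HF HUp).
    + exact (smooth_Dv U F (0%nat::nil)%list 1 u v t HF HUp).
  - intros eps. destruct (smooth_cont U F (0%nat::1%nat::nil)%list s1 s2 t HF Hp eps (cond_pos eps)) as [del [Hdel H]].
    exists (mkposreal _ Hdel). intros u v Hu Hv. apply H; auto. apply R0lt; auto.
  - intros eps. destruct (smooth_cont U F (1%nat::0%nat::nil)%list s1 s2 t HF Hp eps (cond_pos eps)) as [del [Hdel H]].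
    exists (mkposreal _ Hdel). intros u v Hu Hv. apply H; auto. apply R0lt; auto.
Qed.

Lemma pd_comm02 U F s1 s2 t : open3 U -> smooth_on U F -> U s1 s2 t ->
  pd 0 (pd 2 F) s1 s2 t = pd 2 (pd 0 F) s1 s2 t.
Proof.
  intros HU HF Hp. destruct (HU _ _ _ Hp) as [d [Hd HB]].
  apply (schwarz2 (fun z w => F z s2 w) (fun u v => pd 0 F u s2 v) (fun u v => pd 2 F u s2 v)
     (fun u v => pd 2 (pd 0 F) u s2 v) (fun u v => pd 0 (pd 2 F) u s2 v) s1 t d Hd).
  - intros u v Hu Hv. assert (HUp : U u s2 v) by (apply HB; auto; apply R0lt; auto).
    repeat split.
    + exact (smooth_Dv U F nil 0 u s2 v HF HUp).
    + exact (smooth_Dv U F nil 2 u s2 v HF HUp).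
    + exact (smooth_Dv U F (2%nat::nil)%list 0 u s2 v HF HUp).
    + exact (smooth_Dv U F (0%nat::nil)%list 2 u s2 v HF HUp).
  - intros eps. destruct (smooth_cont U F (0%nat::2%nat::nil)%list s1 s2 t HF Hp eps (cond_pos eps)) as [del [Hdel H]].
    exists (mkposreal _ Hdel). intros u v Hu Hv. apply H; auto. apply R0lt; auto.
  - intros eps. destruct (smooth_cont U F (2%nat::0%nat::nil)%list s1 s2 t HF Hp eps (cond_pos eps)) as [del [Hdel H]].
    exists (mkposreal _ Hdel). intros u v Hu Hv. apply H; auto. apply R0lt; auto.
Qed.

Lemma pd_comm12 U F s1 s2 t : open3 U -> smooth_on U F -> U s1 s2 t ->
  pd 1 (pd 2 F) s1 s2 t = pd 2 (pd 1 F) s1 s2 t.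
Proof.
  intros HU HF Hp. destruct (HU _ _ _ Hp) as [d [Hd HB]].
  apply (schwarz2 (fun z w => F s1 z w) (fun u v => pd 1 F s1 u v) (fun u v => pd 2 F s1 u v)
     (fun u v => pd 2 (pd 1 F) s1 u v) (fun u v => pd 1 (pd 2 F) s1 u v) s2 t d Hd).
  - intros u v Hu Hv. assert (HUp : U s1 u v) by (apply HB; auto; apply R0lt; auto).
    repeat split.
    + exact (smooth_Dv U F nil 1 s1 u v HF HUp).
    + exact (smooth_Dv U F nil 2 s1 u v HF HUp).
    + exact (smooth_Dv U F (2%nat::nil)%list 1 s1 u v HF HUp).
    + exact (smooth_Dv U F (1%nat::nil)%list 2 s1 u v HF HUp).
  - intros eps. destruct (smooth_cont U F (1%nat::2%nat::nil)%list s1 s2 t HF Hp eps (cond_pos eps)) as [del [Hdel H]].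
    exists (mkposreal _ Hdel). intros u v Hu Hv. apply H; auto. apply R0lt; auto.
  - intros eps. destruct (smooth_cont U F (2%nat::1%nat::nil)%list s1 s2 t HF Hp eps (cond_pos eps)) as [del [Hdel H]].
    exists (mkposreal _ Hdel). intros u v Hu Hv. apply H; auto. apply R0lt; auto.
Qed.

Lemma pd_comm U F j k s1 s2 t : (j < 3)%nat -> (k < 3)%nat -> open3 U -> smooth_on U F -> U s1 s2 t ->
  pd j (pd k F) s1 s2 t = pd k (pd j F) s1 s2 t.
Proof.
  intros Hj Hk HU HF Hp.
  destruct j as [|[|[|j]]]; [| | |lia]; destruct k as [|[|[|k]]]; try lia; try reflexivity.
  - apply (pd_comm01 U); auto.
  - apply (pd_comm02 U); auto.
  - symmetry; apply (pd_comm01 U); auto.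
  - apply (pd_comm12 U); auto.
  - symmetry; apply (pd_comm02 U); auto.
  - symmetry; apply (pd_comm12 U); auto.
Qed.

Lemma smooth_pd U F k : smooth_on U F -> smooth_on U (pd k F).
Proof.
  intros HF l s1 s2 t Hp.
  replace (pds l (pd k F)) with (pds (l ++ k :: nil) F).
  - apply HF; auto.
  - induction l as [|m l IH]; simpl; auto. rewrite IH; auto.
Qed.

Lemma Df_add k f g s1 s2 t : Df k f s1 s2 t -> Df k g s1 s2 t -> Df k (fun a b c => f a b c + g a b c) s1 s2 t.
Proof. intros [l1 H1] [l2 H2]. eexists; apply Dv_add; eauto. Qed.
Lemma Df_sub k f g s1 s2 t : Df k f s1 s2 t -> Df k g s1 s2 t -> Df k (fun a b c => f a b c - g a b c) s1 s2 t.
Proof. intros [l1 H1] [l2 H2]. eexists; apply Dv_sub; eauto. Qed.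
Lemma Df_mul k f g s1 s2 t : Df k f s1 s2 t -> Df k g s1 s2 t -> Df k (fun a b c => f a b c * g a b c) s1 s2 t.
Proof. intros [l1 H1] [l2 H2]. eexists; apply Dv_mul; eauto. Qed.
Lemma Df_opp k f s1 s2 t : Df k f s1 s2 t -> Df k (fun a b c => - f a b c) s1 s2 t.
Proof. intros [l1 H1]. eexists; apply Dv_opp; eauto. Qed.
Lemma Df_div k f g s1 s2 t : Df k f s1 s2 t -> Df k g s1 s2 t -> g s1 s2 t <> 0 -> Df k (fun a b c => f a b c / g a b c) s1 s2 t.
Proof. intros [l1 H1] [l2 H2] H3. eexists; apply Dv_div; eauto. Qed.
Lemma Df_sqrt k f s1 s2 t : Df k f s1 s2 t -> 0 < f s1 s2 t -> Df k (fun a b c => sqrt (f a b c)) s1 s2 t.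
Proof. intros [l1 H1] H3. eexists; apply Dv_sqrt; eauto. Qed.
Lemma Df_const k r s1 s2 t : Df k (fun _ _ _ => r) s1 s2 t.
Proof. eexists; apply Dv_const. Qed.

Lemma pd_add k f g s1 s2 t : Df k f s1 s2 t -> Df k g s1 s2 t ->
  pd k (fun a b c => f a b c + g a b c) s1 s2 t = pd k f s1 s2 t + pd k g s1 s2 t.
Proof. intros H1 H2. apply pd_Dv, Dv_add; apply Df_Dv; auto. Qed.
Lemma pd_sub k f g s1 s2 t : Df k f s1 s2 t -> Df k g s1 s2 t ->
  pd k (fun a b c => f a b c - g a b c) s1 s2 t = pd k f s1 s2 t - pd k g s1 s2 t.
Proof. intros H1 H2. apply pd_Dv, Dv_sub; apply Df_Dv; auto. Qed.
Lemma pd_mul k f g s1 s2 t : Df k f s1 s2 t -> Df k g s1 s2 t ->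
  pd k (fun a b c => f a b c * g a b c) s1 s2 t = pd k f s1 s2 t * g s1 s2 t + f s1 s2 t * pd k g s1 s2 t.
Proof. intros H1 H2. apply pd_Dv, Dv_mul; apply Df_Dv; auto. Qed.

Lemma Df_sum2 k F s1 s2 t : Df k (F 0%nat) s1 s2 t -> Df k (F 1%nat) s1 s2 t -> Df k (sum2 F) s1 s2 t.
Proof. intros. unfold sum2. apply Df_add; auto. Qed.
Lemma Df_dot3 k u v s1 s2 t : (forall i, (i < 3)%nat -> Df k (u i) s1 s2 t) -> (forall i, (i < 3)%nat -> Df k (v i) s1 s2 t) ->
  Df k (dot3 u v) s1 s2 t.
Proof.
  intros Hu Hv. unfold dot3.
  repeat apply Df_add; apply Df_mul; (apply Hu || apply Hv); lia.
Qed.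
Lemma pd_sum2 k F s1 s2 t : Df k (F 0%nat) s1 s2 t -> Df k (F 1%nat) s1 s2 t ->
  pd k (sum2 F) s1 s2 t = pd k (F 0%nat) s1 s2 t + pd k (F 1%nat) s1 s2 t.
Proof. intros. unfold sum2. apply pd_add; auto. Qed.
Lemma pd_dot3 k u v s1 s2 t : (forall i, (i < 3)%nat -> Df k (u i) s1 s2 t) -> (forall i, (i < 3)%nat -> Df k (v i) s1 s2 t) ->
  pd k (dot3 u v) s1 s2 t =
    (pd k (u 0%nat) s1 s2 t * v 0%nat s1 s2 t + u 0%nat s1 s2 t * pd k (v 0%nat) s1 s2 t)
  + (pd k (u 1%nat) s1 s2 t * v 1%nat s1 s2 t + u 1%nat s1 s2 t * pd k (v 1%nat) s1 s2 t)
  + (pd k (u 2%nat) s1 s2 t * v 2%nat s1 s2 t + u 2%nat s1 s2 t * pd k (v 2%nat) s1 s2 t).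
Proof.
  intros Hu Hv. unfold dot3.
  assert (H0 : forall i, (i < 3)%nat -> Df k (fun a b c => u i a b c * v i a b c) s1 s2 t)
    by (intros; apply Df_mul; auto).
  rewrite pd_add, pd_add, !pd_mul; auto; try (apply Hu || apply Hv || apply H0); try lia.
  apply Df_add; apply H0; lia.
Qed.

Section Geo.
Variable U : R -> R -> R -> Prop.
Variable X : nat -> field.
Hypothesis HU : open3 U.
Hypothesis HX : forall i, (i < 3)%nat -> smooth_on U (X i).
Hypothesis Hnd : forall s1 s2 t, U s1 s2 t ->
     dot3 (cross (Sv X 0) (Sv X 1)) (cross (Sv X 0) (Sv X 1)) s1 s2 t <> 0.

Lemma DfX l i k s1 s2 t : (i < 3)%nat -> U s1 s2 t -> Df k (pds l (X i)) s1 s2 t.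
Proof. intros Hi Hp. exact (proj2 (HX i Hi l s1 s2 t Hp) k). Qed.

Lemma Df_Sv a i k s1 s2 t : (i < 3)%nat -> U s1 s2 t -> Df k (Sv X a i) s1 s2 t.
Proof. intros. change (Df k (pds (a :: nil) (X i)) s1 s2 t). apply DfX; auto. Qed.
Lemma Df_dSv a c i k s1 s2 t : (i < 3)%nat -> U s1 s2 t -> Df k (pd a (Sv X c i)) s1 s2 t.
Proof. intros. change (Df k (pds (a :: c :: nil) (X i)) s1 s2 t). apply DfX; auto. Qed.
Lemma Df_Vel i k s1 s2 t : (i < 3)%nat -> U s1 s2 t -> Df k (Vel X i) s1 s2 t.
Proof. intros. change (Df k (pds (2%nat :: nil) (X i)) s1 s2 t). apply DfX; auto. Qed.
Lemma Df_ddSv a b c i k s1 s2 t : (i < 3)%nat -> U s1 s2 t -> Df k (pd a (pd b (Sv X c i))) s1 s2 t.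
Proof. intros. change (Df k (pds (a :: b :: c :: nil) (X i)) s1 s2 t). apply DfX; auto. Qed.

Definition cr := cross (Sv X 0) (Sv X 1).
Definition qq := dot3 cr cr.

Lemma gdet_qq s1 s2 t : gdet X s1 s2 t = qq s1 s2 t.
Proof. unfold gdet, qq, cr, gcov, dot3, cross. ring. Qed.

Lemma qq_pos s1 s2 t : U s1 s2 t -> 0 < qq s1 s2 t.
Proof.
  intros Hp. pose proof (Hnd s1 s2 t Hp) as H. fold cr qq in H.
  assert (0 <= qq s1 s2 t) by (unfold qq, dot3; nra). lra.
Qed.

Lemma gdet_nz s1 s2 t : U s1 s2 t -> gdet X s1 s2 t <> 0.
Proof. intros Hp. rewrite gdet_qq. pose proof (qq_pos _ _ _ Hp). lra. Qed.

Lemma Df_gcov a b k s1 s2 t : U s1 s2 t -> Df k (gcov X a b) s1 s2 t.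
Proof. intros Hp. unfold gcov. apply Df_dot3; intros; apply Df_Sv; auto. Qed.

Lemma Df_gdet k s1 s2 t : U s1 s2 t -> Df k (gdet X) s1 s2 t.
Proof. intros Hp. unfold gdet. apply Df_sub; apply Df_mul; apply Df_gcov; auto. Qed.

Lemma Df_gcon a b k s1 s2 t : (a < 2)%nat -> (b < 2)%nat -> U s1 s2 t -> Df k (gcon X a b) s1 s2 t.
Proof.
  intros Ha Hb Hp.
  destruct a as [|[|a]]; [| |lia]; destruct b as [|[|b]]; try lia; unfold gcon;
  apply Df_div; try apply Df_opp; try apply Df_gcov; try apply Df_gdet; try apply gdet_nz; auto.
Qed.

Lemma Df_Sup a i k s1 s2 t : (a < 2)%nat -> (i < 3)%nat -> U s1 s2 t -> Df k (Sup X a i) s1 s2 t.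
Proof.
  intros Ha Hi Hp. unfold Sup. apply Df_sum2; apply Df_mul; (apply Df_gcon || apply Df_Sv); auto.
Qed.

Lemma Df_cr i k s1 s2 t : U s1 s2 t -> Df k (cr i) s1 s2 t.
Proof.
  intros Hp. unfold cr, cross. destruct i as [|[|i]]; apply Df_sub; apply Df_mul; apply Df_Sv; auto.
Qed.

Lemma Df_Nrm i k s1 s2 t : U s1 s2 t -> Df k (Nrm X i) s1 s2 t.
Proof.
  intros Hp. unfold Nrm. fold cr.
  apply Df_div.
  - apply Df_cr; auto.
  - apply Df_sqrt. apply Df_dot3; intros; apply Df_cr; auto. apply qq_pos; auto.
  - pose proof (qq_pos _ _ _ Hp). unfold qq in H. apply Rgt_not_eq, sqrt_lt_R0; auto.
Qed.


Definition kd (a b : nat) : R := if Nat.eqb a b then 1 else 0.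

Lemma Id1 a b s1 s2 t : (a < 2)%nat -> (b < 2)%nat -> U s1 s2 t -> dot3 (Sup X a) (Sv X b) s1 s2 t = kd a b.
Proof.
  intros Ha Hb Hp. pose proof (gdet_nz _ _ _ Hp) as H.
  unfold gdet, gcov, dot3 in H.
  destruct a as [|[|a]]; [| |lia]; destruct b as [|[|b]]; try lia;
  unfold kd, Sup, sum2, gcon, gdet, gcov, dot3; simpl; field; auto.
Qed.

Lemma sqrt_qq_nz s1 s2 t : U s1 s2 t -> sqrt (qq s1 s2 t) <> 0.
Proof. intros Hp. apply Rgt_not_eq, sqrt_lt_R0, qq_pos; auto. Qed.

Lemma Nrm_eq i s1 s2 t : Nrm X i s1 s2 t = cr i s1 s2 t / sqrt (qq s1 s2 t).
Proof. reflexivity. Qed.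

Lemma Id2 b s1 s2 t : (b < 2)%nat -> U s1 s2 t -> dot3 (Nrm X) (Sv X b) s1 s2 t = 0.
Proof.
  intros Hb Hp. pose proof (sqrt_qq_nz _ _ _ Hp) as H.
  unfold dot3. rewrite !Nrm_eq.
  replace (cr 0 s1 s2 t / sqrt (qq s1 s2 t) * Sv X b 0 s1 s2 t +
           cr 1 s1 s2 t / sqrt (qq s1 s2 t) * Sv X b 1 s1 s2 t +
           cr 2 s1 s2 t / sqrt (qq s1 s2 t) * Sv X b 2 s1 s2 t)
   with ((cr 0 s1 s2 t * Sv X b 0 s1 s2 t + cr 1 s1 s2 t * Sv X b 1 s1 s2 t + cr 2 s1 s2 t * Sv X b 2 s1 s2 t) / sqrt (qq s1 s2 t))
   by (field; auto).
  destruct b as [|[|b]]; try lia; unfold cr, cross; simpl; unfold Rdiv; ring.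
Qed.

Lemma NN i j s1 s2 t : U s1 s2 t -> Nrm X i s1 s2 t * Nrm X j s1 s2 t = cr i s1 s2 t * cr j s1 s2 t / gdet X s1 s2 t.
Proof.
  intros Hp. rewrite !Nrm_eq, gdet_qq. pose proof (sqrt_qq_nz _ _ _ Hp) as H.
  pose proof (sqrt_sqrt (qq s1 s2 t) (Rlt_le _ _ (qq_pos _ _ _ Hp))) as E.
  set (s := sqrt (qq s1 s2 t)) in *. rewrite <- E. field; auto.
Qed.

Lemma Id3 s1 s2 t : U s1 s2 t -> dot3 (Nrm X) (Nrm X) s1 s2 t = 1.
Proof.
  intros Hp. unfold dot3. rewrite !NN by auto. rewrite gdet_qq.
  pose proof (qq_pos _ _ _ Hp). unfold qq, dot3. field. unfold qq, dot3 in H. lra.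
Qed.

Lemma Id4 a s1 s2 t : (a < 2)%nat -> U s1 s2 t -> dot3 (Sup X a) (Nrm X) s1 s2 t = 0.
Proof.
  intros Ha Hp.
  transitivity (gcon X a 0 s1 s2 t * dot3 (Nrm X) (Sv X 0) s1 s2 t + gcon X a 1 s1 s2 t * dot3 (Nrm X) (Sv X 1) s1 s2 t).
  - unfold Sup, sum2, dot3. ring.
  - rewrite !Id2 by (auto; lia). ring.
Qed.

Lemma Id5 a b s1 s2 t : (a < 2)%nat -> (b < 2)%nat -> U s1 s2 t -> gcon X a b s1 s2 t = dot3 (Sup X a) (Sup X b) s1 s2 t.
Proof.
  intros Ha Hb Hp. pose proof (gdet_nz _ _ _ Hp) as H.
  unfold gdet, gcov, dot3 in H.
  destruct a as [|[|a]]; [| |lia]; destruct b as [|[|b]]; try lia;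
  unfold Sup, sum2, gcon, gdet, gcov, dot3; simpl; field; auto.
Qed.

Definition d3 (w v : nat -> R) := w 0%nat * v 0%nat + w 1%nat * v 1%nat + w 2%nat * v 2%nat.
Definition at3 (u : nat -> field) s1 s2 t := fun i => u i s1 s2 t.

Lemma Id6 (w : nat -> R) i s1 s2 t : (i < 3)%nat -> U s1 s2 t ->
  w i = d3 w (at3 (Sup X 0) s1 s2 t) * Sv X 0 i s1 s2 t + d3 w (at3 (Sup X 1) s1 s2 t) * Sv X 1 i s1 s2 t
        + d3 w (at3 (Nrm X) s1 s2 t) * Nrm X i s1 s2 t.
Proof.
  intros Hi Hp.
  replace (d3 w (at3 (Nrm X) s1 s2 t) * Nrm X i s1 s2 t) with
    (w 0%nat * (Nrm X 0 s1 s2 t * Nrm X i s1 s2 t) + w 1%nat * (Nrm X 1 s1 s2 t * Nrm X i s1 s2 t)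
     + w 2%nat * (Nrm X 2 s1 s2 t * Nrm X i s1 s2 t)) by (unfold d3, at3; ring).
  rewrite !NN by auto.
  pose proof (gdet_nz _ _ _ Hp) as H. unfold gdet, gcov, dot3 in H.
  destruct i as [|[|[|i]]]; try lia;
  unfold d3, at3, Sup, sum2, gcon, gdet, gcov, dot3, cr, cross; simpl; field; auto.
Qed.

Lemma Id7 (w : nat -> R) i s1 s2 t : (i < 3)%nat -> U s1 s2 t ->
  w i = d3 w (at3 (Sv X 0) s1 s2 t) * Sup X 0 i s1 s2 t + d3 w (at3 (Sv X 1) s1 s2 t) * Sup X 1 i s1 s2 t
        + d3 w (at3 (Nrm X) s1 s2 t) * Nrm X i s1 s2 t.
Proof.
  intros Hi Hp.
  replace (d3 w (at3 (Nrm X) s1 s2 t) * Nrm X i s1 s2 t) with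
    (w 0%nat * (Nrm X 0 s1 s2 t * Nrm X i s1 s2 t) + w 1%nat * (Nrm X 1 s1 s2 t * Nrm X i s1 s2 t)
     + w 2%nat * (Nrm X 2 s1 s2 t * Nrm X i s1 s2 t)) by (unfold d3, at3; ring).
  rewrite !NN by auto.
  pose proof (gdet_nz _ _ _ Hp) as H. unfold gdet, gcov, dot3 in H.
  destruct i as [|[|[|i]]]; try lia;
  unfold d3, at3, Sup, sum2, gcon, gdet, gcov, dot3, cr, cross; simpl; field; auto.
Qed.


Lemma dconst u v r k s1 s2 t : U s1 s2 t -> (forall a b c, U a b c -> dot3 u v a b c = r) ->
  (forall i, (i < 3)%nat -> Df k (u i) s1 s2 t) -> (forall i, (i < 3)%nat -> Df k (v i) s1 s2 t) ->
    (pd k (u 0%nat) s1 s2 t * v 0%nat s1 s2 t + u 0%nat s1 s2 t * pd k (v 0%nat) s1 s2 t)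
  + (pd k (u 1%nat) s1 s2 t * v 1%nat s1 s2 t + u 1%nat s1 s2 t * pd k (v 1%nat) s1 s2 t)
  + (pd k (u 2%nat) s1 s2 t * v 2%nat s1 s2 t + u 2%nat s1 s2 t * pd k (v 2%nat) s1 s2 t) = 0.
Proof.
  intros Hp Hc Hu Hv. rewrite <- pd_dot3 by auto. apply (pd_const_loc U _ r); auto.
Qed.

Definition BB k d := dot3 (Nrm X) (fun j => pd k (Sv X d j)).

Ltac sc c H := let H' := fresh "S" in pose proof (f_equal (Rmult c) H) as H'; rewrite Rmult_0_r in H'.

Lemma I1 b i k s1 s2 t : (b < 2)%nat -> (i < 3)%nat -> U s1 s2 t ->
  pd k (Sup X b i) s1 s2 t =
   -(Gam X b k 0 s1 s2 t * Sup X 0 i s1 s2 t + Gam X b k 1 s1 s2 t * Sup X 1 i s1 s2 t)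
   + (gcon X b 0 s1 s2 t * BB k 0 s1 s2 t + gcon X b 1 s1 s2 t * BB k 1 s1 s2 t) * Nrm X i s1 s2 t.
Proof.
  intros Hb Hi Hp.
  pose proof (Id7 (fun j => pd k (Sup X b j) s1 s2 t) i s1 s2 t Hi Hp) as E. simpl in E. rewrite E. clear E.
  assert (HSup : forall a j, (a < 2)%nat -> (j < 3)%nat -> Df k (Sup X a j) s1 s2 t) by (intros; apply Df_Sup; auto).
  assert (HSv : forall a j, (j < 3)%nat -> Df k (Sv X a j) s1 s2 t) by (intros; apply Df_Sv; auto).
  assert (HN : forall j, (j < 3)%nat -> Df k (Nrm X j) s1 s2 t) by (intros; apply Df_Nrm; auto).
  pose proof (dconst (Sup X b) (Sv X 0) (kd b 0) k s1 s2 t Hp (fun a b' c H => Id1 b 0 a b' c Hb ltac:(lia) H)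
     (fun j Hj => HSup b j Hb Hj) (fun j Hj => HSv 0%nat j Hj)) as F10.
  pose proof (dconst (Sup X b) (Sv X 1) (kd b 1) k s1 s2 t Hp (fun a b' c H => Id1 b 1 a b' c Hb ltac:(lia) H)
     (fun j Hj => HSup b j Hb Hj) (fun j Hj => HSv 1%nat j Hj)) as F11.
  pose proof (dconst (Sup X b) (Nrm X) 0 k s1 s2 t Hp (fun a b' c H => Id4 b a b' c Hb H)
     (fun j Hj => HSup b j Hb Hj) HN) as F2.
  pose proof (dconst (Nrm X) (Sv X 0) 0 k s1 s2 t Hp (fun a b' c H => Id2 0 a b' c ltac:(lia) H)
     HN (fun j Hj => HSv 0%nat j Hj)) as F30.
  pose proof (dconst (Nrm X) (Sv X 1) 0 k s1 s2 t Hp (fun a b' c H => Id2 1 a b' c ltac:(lia) H)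
     HN (fun j Hj => HSv 1%nat j Hj)) as F31.
  sc (Sup X 0 i s1 s2 t) F10. sc (Sup X 1 i s1 s2 t) F11. sc (Nrm X i s1 s2 t) F2.
  sc (Nrm X i s1 s2 t * gcon X b 0 s1 s2 t) F30. sc (Nrm X i s1 s2 t * gcon X b 1 s1 s2 t) F31.
  clear F10 F11 F2 F30 F31.
  unfold d3, at3, Gam, BB, dot3 in *.
  unfold Sup, sum2 in *. lra.
Qed.

Lemma HSup_all k s1 s2 t : U s1 s2 t -> forall a j, (a < 2)%nat -> (j < 3)%nat -> Df k (Sup X a j) s1 s2 t.
Proof. intros; apply Df_Sup; auto. Qed.
Lemma HSv_all k s1 s2 t : U s1 s2 t -> forall a j, (j < 3)%nat -> Df k (Sv X a j) s1 s2 t.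
Proof. intros; apply Df_Sv; auto. Qed.
Lemma HN_all k s1 s2 t : U s1 s2 t -> forall j, (j < 3)%nat -> Df k (Nrm X j) s1 s2 t.
Proof. intros; apply Df_Nrm; auto. Qed.

Lemma I2 i k s1 s2 t : (i < 3)%nat -> U s1 s2 t ->
  pd k (Nrm X i) s1 s2 t = -(BB k 0 s1 s2 t * Sup X 0 i s1 s2 t + BB k 1 s1 s2 t * Sup X 1 i s1 s2 t).
Proof.
  intros Hi Hp.
  pose proof (Id7 (fun j => pd k (Nrm X j) s1 s2 t) i s1 s2 t Hi Hp) as E. simpl in E. rewrite E. clear E.
  pose proof (HSv_all k _ _ _ Hp) as HSv. pose proof (HN_all k _ _ _ Hp) as HN.
  pose proof (dconst (Nrm X) (Nrm X) 1 k s1 s2 t Hp (fun a b' c H => Id3 a b' c H) HN HN) as F4.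
  pose proof (dconst (Nrm X) (Sv X 0) 0 k s1 s2 t Hp (fun a b' c H => Id2 0 a b' c ltac:(lia) H)
     HN (fun j Hj => HSv 0%nat j Hj)) as F30.
  pose proof (dconst (Nrm X) (Sv X 1) 0 k s1 s2 t Hp (fun a b' c H => Id2 1 a b' c ltac:(lia) H)
     HN (fun j Hj => HSv 1%nat j Hj)) as F31.
  sc (Nrm X i s1 s2 t) F4. sc (Sup X 0 i s1 s2 t) F30. sc (Sup X 1 i s1 s2 t) F31.
  clear F4 F30 F31.
  unfold d3, at3, BB, dot3 in *. lra.
Qed.

Lemma Bcov_BB a c s1 s2 t : U s1 s2 t -> Bcov X a c s1 s2 t = BB a c s1 s2 t.
Proof.
  intros Hp.
  pose proof (Id2 0 s1 s2 t ltac:(lia) Hp) as E0. pose proof (Id2 1 s1 s2 t ltac:(lia) Hp) as E1.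
  sc (Gam X 0 a c s1 s2 t) E0. sc (Gam X 1 a c s1 s2 t) E1.
  unfold Bcov, covS, BB, sum2, dot3 in *. lra.
Qed.

Lemma covS_eq a c i s1 s2 t : (i < 3)%nat -> U s1 s2 t -> covS X a c i s1 s2 t = BB a c s1 s2 t * Nrm X i s1 s2 t.
Proof.
  intros Hi Hp.
  pose proof (Id6 (fun j => pd a (Sv X c j) s1 s2 t) i s1 s2 t Hi Hp) as E. simpl in E.
  unfold covS, BB, Gam, sum2, d3, at3, dot3 in *. lra.
Qed.

Lemma dS_sym a c i s1 s2 t : (a < 3)%nat -> (c < 3)%nat -> (i < 3)%nat -> U s1 s2 t ->
  pd a (Sv X c i) s1 s2 t = pd c (Sv X a i) s1 s2 t.
Proof. intros. unfold Sv. apply (pd_comm U); auto. Qed.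

Lemma Gam_sym b a c s1 s2 t : (a < 3)%nat -> (c < 3)%nat -> U s1 s2 t ->
  Gam X b a c s1 s2 t = Gam X b c a s1 s2 t.
Proof. intros. unfold Gam, dot3. rewrite !(dS_sym a c) by (auto; lia). reflexivity. Qed.

Lemma BB_sym a c s1 s2 t : (a < 3)%nat -> (c < 3)%nat -> U s1 s2 t ->
  BB a c s1 s2 t = BB c a s1 s2 t.
Proof. intros. unfold BB, dot3. rewrite !(dS_sym a c) by (auto; lia). reflexivity. Qed.

Definition T3 b k a c := dot3 (Sup X b) (fun i => pd k (pd a (Sv X c i))).

Lemma pdGam b k a c s1 s2 t : (b < 2)%nat -> U s1 s2 t ->
  pd k (Gam X b a c) s1 s2 t =
   -(Gam X b k 0 s1 s2 t * Gam X 0 a c s1 s2 t + Gam X b k 1 s1 s2 t * Gam X 1 a c s1 s2 t)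
   + (gcon X b 0 s1 s2 t * BB k 0 s1 s2 t + gcon X b 1 s1 s2 t * BB k 1 s1 s2 t) * BB a c s1 s2 t
   + T3 b k a c s1 s2 t.
Proof.
  intros Hb Hp. unfold Gam at 1. rewrite pd_dot3.
  - cbv beta. rewrite !I1 by (auto; lia). unfold Gam, BB, T3, dot3. ring.
  - intros; apply Df_Sup; auto.
  - intros; apply Df_dSv; auto.
Qed.

Lemma Df_Gam b a c k s1 s2 t : (b < 2)%nat -> U s1 s2 t -> Df k (Gam X b a c) s1 s2 t.
Proof. intros. unfold Gam. apply Df_dot3; intros; [apply Df_Sup|apply Df_dSv]; auto. Qed.
Lemma Df_Vup b k s1 s2 t : (b < 2)%nat -> U s1 s2 t -> Df k (Vup X b) s1 s2 t.
Proof. intros. unfold Vup. apply Df_dot3; intros; [apply Df_Vel|apply Df_Sup]; auto. Qed.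
Lemma Df_Cn k s1 s2 t : U s1 s2 t -> Df k (Cn X) s1 s2 t.
Proof. intros. unfold Cn. apply Df_dot3; intros; [apply Df_Vel|apply Df_Nrm]; auto. Qed.
Lemma Df_covS a c i k s1 s2 t : (i < 3)%nat -> U s1 s2 t -> Df k (covS X a c i) s1 s2 t.
Proof.
  intros. unfold covS. apply Df_sub; [apply Df_dSv; auto|].
  apply Df_sum2; apply Df_mul; [apply Df_Gam|apply Df_Sv| apply Df_Gam| apply Df_Sv]; auto.
Qed.
Lemma Df_Bcov a c k s1 s2 t : U s1 s2 t -> Df k (Bcov X a c) s1 s2 t.
Proof. intros. unfold Bcov. apply Df_dot3; intros; [apply Df_Nrm|apply Df_covS]; auto. Qed.
Lemma Df_Bmix b a k s1 s2 t : (b < 2)%nat -> U s1 s2 t -> Df k (Bmix X b a) s1 s2 t.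
Proof.
  intros. unfold Bmix. apply Df_sum2; apply Df_mul; try apply Df_gcon; try apply Df_Bcov; auto; lia.
Qed.

Lemma Vel_Sv i s1 s2 t : pd 0 (Vel X i) s1 s2 t = pd 0 (Vel X i) s1 s2 t.
Proof. reflexivity. Qed.

Lemma dVel c i s1 s2 t : (c < 3)%nat -> (i < 3)%nat -> U s1 s2 t -> pd c (Vel X i) s1 s2 t = pd 2 (Sv X c i) s1 s2 t.
Proof. intros. unfold Vel, Sv. apply (pd_comm U); auto. Qed.

Lemma Gdot_eq b c s1 s2 t : (b < 2)%nat -> (c < 2)%nat -> U s1 s2 t -> Gdot X b c s1 s2 t = Gam X b 2 c s1 s2 t.
Proof.
  intros Hb Hc Hp. unfold Gdot, nab_v. unfold Vup at 1.
  rewrite pd_dot3 by (intros; (apply Df_Vel || apply Df_Sup); auto).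
  rewrite !I1 by (auto; lia). rewrite !dVel by (auto; lia).
  unfold Bmix, sum2. rewrite !Bcov_BB by auto.
  rewrite (BB_sym 0 c), (BB_sym 1 c) by (auto; lia).
  unfold Cn, Vup, Gam, BB, dot3. ring.
Qed.

Lemma pdGdot a b c s1 s2 t : (b < 2)%nat -> (c < 2)%nat -> U s1 s2 t ->
  pd a (Gdot X b c) s1 s2 t = pd a (Gam X b 2 c) s1 s2 t.
Proof. intros. apply (pd_loc U); auto. intros; apply Gdot_eq; auto. Qed.

Lemma pdCn d s1 s2 t : (d < 3)%nat -> U s1 s2 t ->
  pd d (Cn X) s1 s2 t = BB 2 d s1 s2 t - (BB d 0 s1 s2 t * Vup X 0 s1 s2 t + BB d 1 s1 s2 t * Vup X 1 s1 s2 t).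
Proof.
  intros Hd Hp. unfold Cn at 1.
  rewrite pd_dot3 by (intros; (apply Df_Vel || apply Df_Nrm); auto).
  rewrite !I2 by (auto; lia). rewrite !dVel by (auto; lia).
  unfold Vup, BB, dot3. ring.
Qed.

Lemma T3_sym b k a c s1 s2 t : (k < 3)%nat -> (a < 3)%nat -> U s1 s2 t -> T3 b k a c s1 s2 t = T3 b a k c s1 s2 t.
Proof.
  intros. unfold T3, dot3, Sv.
  rewrite !(pd_comm U (pd c (X _)) k a) by (auto; try lia; apply smooth_pd, HX; lia). reflexivity.
Qed.

Lemma gcon_sym s1 s2 t : gcon X 1 0 s1 s2 t = gcon X 0 1 s1 s2 t.
Proof. unfold gcon, gcov, dot3. simpl. f_equal. f_equal. ring. Qed.


Ltac canon Hp := repeat first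
  [ rewrite (Gam_sym _ 1 0) by (auto; lia)
  | rewrite (BB_sym 1 0) by (auto; lia)
  | rewrite (T3_sym _ 1 0) by (auto; lia)
  | rewrite (T3_sym _ 2 0) by (auto; lia)
  | rewrite (T3_sym _ 2 1) by (auto; lia)
  | rewrite gcon_sym ].

Lemma Eq2 a b c s1 s2 t : (a < 2)%nat -> (b < 2)%nat -> (c < 2)%nat -> U s1 s2 t ->
  Rdot X b a c s1 s2 t = Bcov X a c s1 s2 t * nab_up_s X b (Cn X) s1 s2 t - Bmix X b a s1 s2 t * pd c (Cn X) s1 s2 t.
Proof.
  intros Ha Hb Hc Hp.
  unfold Rdot, nab_mix, Riem, nab_up_s, Bmix, sum2. cbv beta.
  rewrite pdGdot by auto.
  rewrite !pdGam by (auto; lia).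
  rewrite !Gdot_eq by (auto; lia).
  rewrite !pdCn by (auto; lia).
  rewrite !Bcov_BB by auto.
  destruct a as [|[|a]]; [| |lia]; destruct b as [|[|b]]; try lia; destruct c as [|[|c]]; try lia;
  canon Hp; ring.
Qed.


Ltac sc2 c H := let H' := fresh "S" in pose proof (f_equal (Rmult c) H) as H'.

Lemma pdcovS d a c i s1 s2 t : (i < 3)%nat -> U s1 s2 t ->
  pd d (covS X a c i) s1 s2 t = pd d (pd a (Sv X c i)) s1 s2 t
    - ((pd d (Gam X 0 a c) s1 s2 t * Sv X 0 i s1 s2 t + Gam X 0 a c s1 s2 t * pd d (Sv X 0 i) s1 s2 t)
     + (pd d (Gam X 1 a c) s1 s2 t * Sv X 1 i s1 s2 t + Gam X 1 a c s1 s2 t * pd d (Sv X 1 i) s1 s2 t)).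
Proof.
  intros Hi Hp. unfold covS.
  rewrite pd_sub.
  - rewrite pd_sum2; cbv beta.
    + rewrite !pd_mul; auto; (apply Df_Gam || apply Df_Sv); auto.
    + apply Df_mul; (apply Df_Gam || apply Df_Sv); auto.
    + apply Df_mul; (apply Df_Gam || apply Df_Sv); auto.
  - apply Df_dSv; auto.
  - apply Df_sum2; apply Df_mul; (apply Df_Gam || apply Df_Sv); auto.
Qed.

Definition N3 d a c := dot3 (Nrm X) (fun i => pd d (pd a (Sv X c i))).

Lemma pdBcov d a c s1 s2 t : U s1 s2 t ->
  pd d (Bcov X a c) s1 s2 t = N3 d a c s1 s2 t - (Gam X 0 a c s1 s2 t * BB d 0 s1 s2 t + Gam X 1 a c s1 s2 t * BB d 1 s1 s2 t).
Proof.
  intros Hp. unfold Bcov at 1.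
  rewrite pd_dot3 by (intros; (apply Df_Nrm || apply Df_covS); auto).
  rewrite !covS_eq by (auto; lia). rewrite !pdcovS by (auto; lia).
  pose proof (dconst (Nrm X) (Nrm X) 1 d s1 s2 t Hp (fun a b' c H => Id3 a b' c H) (HN_all d _ _ _ Hp) (HN_all d _ _ _ Hp)) as F4.
  pose proof (Id2 0 s1 s2 t ltac:(lia) Hp) as E0. pose proof (Id2 1 s1 s2 t ltac:(lia) Hp) as E1.
  sc2 (pd d (Gam X 0 a c) s1 s2 t) E0. sc2 (pd d (Gam X 1 a c) s1 s2 t) E1.
  sc2 (BB a c s1 s2 t) F4.
  unfold N3, BB, dot3 in *. lra.
Qed.

Lemma pdgcon k b d s1 s2 t : (b < 2)%nat -> (d < 2)%nat -> U s1 s2 t ->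
  pd k (gcon X b d) s1 s2 t =
    -(Gam X b k 0 s1 s2 t * gcon X 0 d s1 s2 t + Gam X b k 1 s1 s2 t * gcon X 1 d s1 s2 t)
    -(Gam X d k 0 s1 s2 t * gcon X b 0 s1 s2 t + Gam X d k 1 s1 s2 t * gcon X b 1 s1 s2 t).
Proof.
  intros Hb Hd Hp.
  rewrite (pd_loc U (gcon X b d) (dot3 (Sup X b) (Sup X d))) by (auto; intros; apply Id5; auto).
  rewrite pd_dot3 by (intros; apply Df_Sup; auto).
  rewrite !I1 by (auto; lia).
  pose proof (Id5 0 d s1 s2 t ltac:(lia) Hd Hp) as E0. pose proof (Id5 1 d s1 s2 t ltac:(lia) Hd Hp) as E1.
  pose proof (Id5 b 0 s1 s2 t Hb ltac:(lia) Hp) as E2. pose proof (Id5 b 1 s1 s2 t Hb ltac:(lia) Hp) as E3.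
  pose proof (Id4 d s1 s2 t Hd Hp) as E4. pose proof (Id4 b s1 s2 t Hb Hp) as E5.
  sc2 (Gam X b k 0 s1 s2 t) E0. sc2 (Gam X b k 1 s1 s2 t) E1.
  sc2 (Gam X d k 0 s1 s2 t) E2. sc2 (Gam X d k 1 s1 s2 t) E3.
  sc2 (gcon X b 0 s1 s2 t * BB k 0 s1 s2 t + gcon X b 1 s1 s2 t * BB k 1 s1 s2 t) E4.
  sc2 (gcon X d 0 s1 s2 t * BB k 0 s1 s2 t + gcon X d 1 s1 s2 t * BB k 1 s1 s2 t) E5.
  clear E0 E1 E2 E3 E4 E5.
  unfold dot3 in *. lra.
Qed.

Lemma pdBmix k b a s1 s2 t : (b < 2)%nat -> U s1 s2 t ->
  pd k (Bmix X b a) s1 s2 t =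
    (pd k (gcon X b 0) s1 s2 t * Bcov X 0 a s1 s2 t + gcon X b 0 s1 s2 t * pd k (Bcov X 0 a) s1 s2 t)
  + (pd k (gcon X b 1) s1 s2 t * Bcov X 1 a s1 s2 t + gcon X b 1 s1 s2 t * pd k (Bcov X 1 a) s1 s2 t).
Proof.
  intros Hb Hp. unfold Bmix.
  rewrite pd_sum2; cbv beta.
  - rewrite !pd_mul; auto; (apply Df_gcon || apply Df_Bcov); auto; lia.
  - apply Df_mul; (apply Df_gcon || apply Df_Bcov); auto; lia.
  - apply Df_mul; (apply Df_gcon || apply Df_Bcov); auto; lia.
Qed.

Lemma N3_out d a c s1 s2 t : (d < 3)%nat -> (a < 3)%nat -> U s1 s2 t -> N3 d a c s1 s2 t = N3 a d c s1 s2 t.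
Proof.
  intros. unfold N3, dot3, Sv.
  rewrite !(pd_comm U (pd c (X _)) d a) by (auto; try lia; apply smooth_pd, HX; lia). reflexivity.
Qed.

Lemma N3_in d a c s1 s2 t : (a < 3)%nat -> (c < 3)%nat -> U s1 s2 t -> N3 d a c s1 s2 t = N3 d c a s1 s2 t.
Proof.
  intros. unfold N3, dot3, Sv.
  rewrite !(pd_loc U (pd a (pd c (X _))) (pd c (pd a (X _)))) by (auto; intros; apply (pd_comm U); auto; lia).
  reflexivity.
Qed.

Ltac canon2 Hp := repeat first
  [ rewrite (Gam_sym _ 1 0) by (auto; lia)
  | rewrite (BB_sym 1 0) by (auto; lia)
  | rewrite (N3_out 1 0) by (auto; lia)
  | rewrite (N3_in _ 1 0) by (auto; lia)
  | rewrite gcon_sym ].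

Lemma Eq1 a b c s1 s2 t : (a < 2)%nat -> (b < 2)%nat -> (c < 2)%nat -> U s1 s2 t ->
  nab_up_cov2 X b (fun a' c' s1 s2 t => Cn X s1 s2 t * Bcov X a' c' s1 s2 t) a c s1 s2 t
  - nab_mix X c (fun b' a' s1 s2 t => Cn X s1 s2 t * Bmix X b' a' s1 s2 t) b a s1 s2 t
  = Bcov X a c s1 s2 t * nab_up_s X b (Cn X) s1 s2 t - Bmix X b a s1 s2 t * pd c (Cn X) s1 s2 t.
Proof.
  intros Ha Hb Hc Hp.
  unfold nab_up_cov2, nab_cov2, nab_mix, nab_up_s, sum2. cbv beta.
  rewrite !pd_mul by (first [apply Df_Cn | apply Df_Bcov | apply Df_Bmix]; auto).
  rewrite !pdBmix by auto.
  rewrite !pdBcov by auto.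
  rewrite !pdgcon by (auto; lia).
  rewrite !pdCn by (auto; lia).
  unfold Bmix, sum2.
  rewrite !Bcov_BB by auto.
  destruct a as [|[|a]]; [| |lia]; destruct b as [|[|b]]; try lia; destruct c as [|[|c]]; try lia;
  canon2 Hp; ring.
Qed.


Lemma pdGam_sym k b s1 s2 t : U s1 s2 t -> pd k (Gam X b 1 0) s1 s2 t = pd k (Gam X b 0 1) s1 s2 t.
Proof. intros. apply (pd_loc U); auto. intros; apply Gam_sym; auto. Qed.

Lemma Df_Gdot b g k s1 s2 t : (b < 2)%nat -> (g < 2)%nat -> U s1 s2 t -> Df k (Gdot X b g) s1 s2 t.
Proof.
  intros. apply (Df_loc U (Gam X b 2 g)); auto.
  - intros; symmetry; apply Gdot_eq; auto.
  - apply Df_Gam; auto.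
Qed.

Variable psi : nat -> field.
Hypothesis Hpsi : forall b, (b < 2)%nat -> smooth_on U (psi b).

Lemma Df_psi l b k s1 s2 t : (b < 2)%nat -> U s1 s2 t -> Df k (pds l (psi b)) s1 s2 t.
Proof. intros Hb Hp. exact (proj2 (Hpsi b Hb l s1 s2 t Hp) k). Qed.
Lemma Df_psi0 b k s1 s2 t : (b < 2)%nat -> U s1 s2 t -> Df k (psi b) s1 s2 t.
Proof. intros. apply (Df_psi nil); auto. Qed.
Lemma Df_psi1 a b k s1 s2 t : (b < 2)%nat -> U s1 s2 t -> Df k (pd a (psi b)) s1 s2 t.
Proof. intros. apply (Df_psi (a :: nil)); auto. Qed.

Lemma Df_nabv g b k s1 s2 t : (b < 2)%nat -> U s1 s2 t -> Df k (nab_v X g psi b) s1 s2 t.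
Proof.
  intros. unfold nab_v. apply Df_add; [apply Df_psi1; auto|].
  apply Df_sum2; apply Df_mul; (apply Df_Gam || apply Df_psi0); auto; lia.
Qed.

Lemma pd_nabv k a b s1 s2 t : (b < 2)%nat -> U s1 s2 t ->
  pd k (nab_v X a psi b) s1 s2 t = pd k (pd a (psi b)) s1 s2 t
   + ((pd k (Gam X b a 0) s1 s2 t * psi 0%nat s1 s2 t + Gam X b a 0 s1 s2 t * pd k (psi 0%nat) s1 s2 t)
    + (pd k (Gam X b a 1) s1 s2 t * psi 1%nat s1 s2 t + Gam X b a 1 s1 s2 t * pd k (psi 1%nat) s1 s2 t)).
Proof.
  intros Hb Hp. unfold nab_v.
  assert (HD : forall d, (d < 2)%nat -> Df k (fun s1 s2 t => Gam X b a d s1 s2 t * psi d s1 s2 t) s1 s2 t)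
    by (intros; apply Df_mul; (apply Df_Gam || apply Df_psi0); auto).
  rewrite pd_add.
  - rewrite pd_sum2 by (apply HD; lia). cbv beta.
    rewrite !pd_mul by ((apply Df_Gam || apply Df_psi0); auto; lia). reflexivity.
  - apply Df_psi1; auto.
  - apply Df_sum2; apply HD; lia.
Qed.

Lemma Df_tdv b k s1 s2 t : (b < 2)%nat -> U s1 s2 t -> Df k (tdv X psi b) s1 s2 t.
Proof.
  intros. unfold tdv. apply Df_add; [apply Df_sub|].
  - apply Df_psi1; auto.
  - apply Df_sum2; apply Df_mul; (apply Df_Vup || apply Df_nabv); auto; lia.
  - apply Df_sum2; apply Df_mul; (apply Df_Gdot || apply Df_psi0); auto; lia.
Qed.

Lemma pd_tdv k b s1 s2 t : (b < 2)%nat -> U s1 s2 t ->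
  pd k (tdv X psi b) s1 s2 t = pd k (pd 2 (psi b)) s1 s2 t
   - ((pd k (Vup X 0) s1 s2 t * nab_v X 0 psi b s1 s2 t + Vup X 0 s1 s2 t * pd k (nab_v X 0 psi b) s1 s2 t)
    + (pd k (Vup X 1) s1 s2 t * nab_v X 1 psi b s1 s2 t + Vup X 1 s1 s2 t * pd k (nab_v X 1 psi b) s1 s2 t))
   + ((pd k (Gdot X b 0) s1 s2 t * psi 0%nat s1 s2 t + Gdot X b 0 s1 s2 t * pd k (psi 0%nat) s1 s2 t)
    + (pd k (Gdot X b 1) s1 s2 t * psi 1%nat s1 s2 t + Gdot X b 1 s1 s2 t * pd k (psi 1%nat) s1 s2 t)).
Proof.
  intros Hb Hp. unfold tdv.
  assert (HD1 : forall g, (g < 2)%nat -> Df k (fun s1 s2 t => Vup X g s1 s2 t * nab_v X g psi b s1 s2 t) s1 s2 t)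
    by (intros; apply Df_mul; (apply Df_Vup || apply Df_nabv); auto).
  assert (HD2 : forall g, (g < 2)%nat -> Df k (fun s1 s2 t => Gdot X b g s1 s2 t * psi g s1 s2 t) s1 s2 t)
    by (intros; apply Df_mul; (apply Df_Gdot || apply Df_psi0); auto).
  rewrite pd_add, pd_sub.
  - rewrite !pd_sum2 by ((apply HD1 || apply HD2); lia). cbv beta.
    rewrite !pd_mul by ((apply Df_Vup || apply Df_nabv || apply Df_Gdot || apply Df_psi0); auto; lia).
    reflexivity.
  - apply Df_psi1; auto.
  - apply Df_sum2; apply HD1; lia.
  - apply Df_sub; [apply Df_psi1; auto| apply Df_sum2; apply HD1; lia].
  - apply Df_sum2; apply HD2; lia.
Qed.

Ltac canon3 Hp := repeat first
  [ rewrite (Gam_sym _ 1 0) by (auto; lia)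
  | rewrite (pdGam_sym _ _) by (auto; lia)
  | rewrite (pd_comm U (psi _) 1 0) by (auto; lia)
  | rewrite (pd_comm U (psi _) 2 0) by (auto; lia)
  | rewrite (pd_comm U (psi _) 2 1) by (auto; lia) ].

Lemma Part2E a b s1 s2 t : (a < 2)%nat -> (b < 2)%nat -> U s1 s2 t ->
     tdmix X (fun b' a' => nab_v X a' psi b') b a s1 s2 t
     - nab_v X a (tdv X psi) b s1 s2 t
     - sum2 (fun g s1 s2 t => Cn X s1 s2 t * Bmix X g a s1 s2 t * nab_v X g psi b s1 s2 t) s1 s2 t
   = Rdot X b a 0 s1 s2 t * psi 0%nat s1 s2 t + Rdot X b a 1 s1 s2 t * psi 1%nat s1 s2 t.
Proof.
  intros Ha Hb Hp.
  unfold tdmix, nab_mix, sum2. cbv beta.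
  rewrite !pd_nabv by (auto; lia).
  unfold nab_v. unfold sum2. cbv beta.
  rewrite !pd_tdv by (auto; lia).
  rewrite !pd_nabv by (auto; lia).
  unfold Rdot, Riem, nab_mix, tdv, Gdot, nab_v, sum2. cbv beta.
  destruct a as [|[|a]]; [| |lia]; destruct b as [|[|b]]; try lia;
  canon3 Hp; ring.
Qed.

End Geo.


Theorem mainTheorem6 (U : R -> R -> R -> Prop) (X : nat -> field) :
  open3 U ->
  (forall i, (i < 3)%nat -> smooth_on U (X i)) ->
  (forall s1 s2 t, U s1 s2 t ->
     dot3 (cross (Sv X 0) (Sv X 1)) (cross (Sv X 0) (Sv X 1)) s1 s2 t <> 0) ->
  (forall s1 s2 t, U s1 s2 t -> forall a b c : nat, (a < 2)%nat -> (b < 2)%nat -> (c < 2)%nat ->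
     Rdot X b a c s1 s2 t
       = nab_up_cov2 X b (fun a' c' s1 s2 t => Cn X s1 s2 t * Bcov X a' c' s1 s2 t) a c s1 s2 t
         - nab_mix X c (fun b' a' s1 s2 t => Cn X s1 s2 t * Bmix X b' a' s1 s2 t) b a s1 s2 t
     /\
     Rdot X b a c s1 s2 t
       = Bcov X a c s1 s2 t * nab_up_s X b (Cn X) s1 s2 t
         - Bmix X b a s1 s2 t * pd c (Cn X) s1 s2 t)
  /\
  (forall psi : nat -> field, (forall b, (b < 2)%nat -> smooth_on U (psi b)) ->
   forall s1 s2 t, U s1 s2 t -> forall a b : nat, (a < 2)%nat -> (b < 2)%nat ->
     tdmix X (fun b' a' => nab_v X a' psi b') b a s1 s2 t
     - nab_v X a (tdv X psi) b s1 s2 t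
     - sum2 (fun g s1 s2 t => Cn X s1 s2 t * Bmix X g a s1 s2 t * nab_v X g psi b s1 s2 t) s1 s2 t
     = sum2 (fun g s1 s2 t =>
          (Bcov X a g s1 s2 t * nab_up_s X b (Cn X) s1 s2 t
           - Bmix X b a s1 s2 t * pd g (Cn X) s1 s2 t) * psi g s1 s2 t) s1 s2 t).
Proof.
  intros HU HX Hnd. split.
  - intros s1 s2 t Hp a b c Ha Hb Hc. split.
    + rewrite (Eq2 U X HU HX Hnd) by auto. symmetry. apply (Eq1 U X HU HX Hnd); auto.
    + apply (Eq2 U X HU HX Hnd); auto.
  - intros psi Hpsi s1 s2 t Hp a b Ha Hb.
    rewrite (Part2E U X HU HX Hnd psi Hpsi) by auto.
    unfold sum2. rewrite !(Eq2 U X HU HX Hnd) by (auto; lia). ring.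
Qed.
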